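(* Let $m,n\geq2$, let $\mathbf p\in\mathbb R^m$, $\mathbf q\in\mathbb R^n$ be probability vectors with all entries strictly positive, and let $\alpha\geq0$, $\alpha\neq1$. Let $H$ denote either the Rényi entropy $H^R_\alpha(P)=\frac1{1-\alpha}\log\big(\sum_{i,j}p_{i,j}^\alpha\big)$ or the Tsallis entropy $H^T_\alpha(P)=\frac1{1-\alpha}\big(\sum_{i,j}p_{i,j}^\alpha-1\big)$. If $\tilde P\in\mathcal C(\mathbf p,\mathbf q)$ satisfies $H(\tilde P)=\inf_{P\in\mathcal C(\mathbf p,\mathbf q)}H(P)$, then $\tilde P\in\mathscr C(\mathbf p,\mathbf q)=\mathcal C_e(\mathbf p,\mathbf q)$ and $H(\tilde P)=\min_{P\in\mathscr C(\mathbf p,\mathbf q)}H(P)$.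
   Context: $\mathcal C(\mathbf p,\mathbf q)$ is the set of nonnegative $m\times n$ matrices with row sums $p_i$ and column sums $q_j$; $\mathcal C_e(\mathbf p,\mathbf q)$ its set of extreme points. $V(P)=\{(i,j):p_{i,j}\neq0\}$. $\mathscr C(\mathbf p,\mathbf q)$ is the set of $P\in\mathcal C(\mathbf p,\mathbf q)$ with $V(P)\subset T$ for some tree $T\subset[m]\times[n]$ with $|T|=m+n-1$. Graph notions: two distinct points of $[m]\times[n]$ are adjacent iff they share a row or a column; a circuit is a cyclic sequence $v_0,\dots,v_{s-1}$ ($s\geq4$) of pairwise distinct points $v_k=(i_k,j_k)$ with (indices mod $s$) $v_k,v_{k+1}$ adjacent and $(i_{k+2}-i_k)(j_{k+2}-j_k)\neq0$ for all $k$; a tree is a connected subset containing no circuit. *)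

(* Defs.v *)
From HB Require Import structures.
From mathcomp Require Import all_boot all_order all_algebra.
From mathcomp Require Import all_classical all_reals.
From mathcomp Require Import exp.
Set Implicit Arguments. Unset Strict Implicit. Unset Printing Implicit Defensive.
Import Order.TTheory GRing.Theory Num.Theory.
Local Open Scope ring_scope.

Section Defs.
Variables (R : realType) (m n : nat).
Local Notation point := ('I_m * 'I_n)%type.

Definition transport (p : 'I_m -> R) (q : 'I_n -> R) (P : 'M[R]_(m, n)) : Prop :=
  [/\ (forall i j, 0 <= P i j),
      (forall i, \sum_(j < n) P i j = p i) &
      (forall j, \sum_(i < m) P i j = q j)].

Definition extreme (p : 'I_m -> R) (q : 'I_n -> R) (P : 'M[R]_(m, n)) : Prop :=
  transport p q P /\
  forall (A B : 'M[R]_(m, n)) (t : R),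
    transport p q A -> transport p q B -> 0 < t < 1 ->
    P = t *: A + (1 - t) *: B -> A = B.

Definition support (P : 'M[R]_(m, n)) : {set point} :=
  [set x : point | P x.1 x.2 != 0].

Definition adjacent (x y : point) : bool :=
  (x != y) && ((x.1 == y.1) || (x.2 == y.2)).

Definition connected_set (T : {set point}) : Prop :=
  forall x y, x \in T -> y \in T ->
    connect (fun u v => [&& u \in T, v \in T & adjacent u v]) x y.

Definition has_circuit (T : {set point}) : Prop :=
  exists (s : nat) (v : 'I_s -> point),
    [/\ (4 <= s)%N, injective v,
        (forall k, v k \in T),
        (forall k, adjacent (v k) (v (ordS k))) &
        (forall k, ((v (ordS (ordS k))).1 != (v k).1) /\
                   ((v (ordS (ordS k))).2 != (v k).2))].

Definition is_tree (T : {set point}) : Prop :=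
  connected_set T /\ ~ has_circuit T.

Definition tree_transport (p : 'I_m -> R) (q : 'I_n -> R) (P : 'M[R]_(m, n)) : Prop :=
  transport p q P /\
  exists T : {set point}, [/\ is_tree T, #|T| = (m + n - 1)%N & support P \subset T].

(* sum of p_{ij}^alpha over the nonzero entries (convention 0^alpha = 0) *)
Definition power_sum (alpha : R) (P : 'M[R]_(m, n)) : R :=
  \sum_(i < m) \sum_(j < n | P i j != 0) powR (P i j) alpha.

Inductive entropy_kind := Renyi | Tsallis.

Definition entropy (k : entropy_kind) (alpha : R) (P : 'M[R]_(m, n)) : R :=
  match k with
  | Renyi => (1 - alpha)^-1 * ln (power_sum alpha P)
  | Tsallis => (1 - alpha)^-1 * (power_sum alpha P - 1)
  end.

End Defs.

(* Main.v *)
Require Import Defs.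
From HB Require Import structures.
From mathcomp Require Import all_boot all_order all_algebra.
From mathcomp Require Import all_classical all_reals.
From mathcomp Require Import sequences exp.
From mathcomp Require Import ring lra.
Import Order.TTheory GRing.Theory Num.Theory.
Local Open Scope ring_scope.
Set Implicit Arguments. Unset Strict Implicit. Unset Printing Implicit Defensive.

Lemma free_setP (R : fieldType) (T : finType) (vT : vectType R) (f : T -> vT) (S : {set T}) (x0 : T) :
  reflect (forall c : T -> R, \sum_(x in S) c x *: f x = 0 -> forall x, x \in S -> c x = 0)
    (free [seq f x | x <- enum S]).
Proof.
set X := [seq f x | x <- enum S].
have sX : #|S| = size (enum S) by rewrite cardE.
have key : forall c : T -> R, \sum_(x in S) c x *: f x =
   \sum_(i < #|S|) c (nth x0 (enum S) i) *: X`_i.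
  move=> c; rewrite -big_enum (big_nth x0) -sX big_mkord.
  apply: eq_bigr => i _; rewrite (nth_map x0) //; by rewrite -sX.
apply: (iffP idP).
- move=> /freeP fX c Hc x xS.
  have := fX (fun i => c (nth x0 (enum S) i)).
  rewrite /= -key => /(_ Hc).
  have xi : (index x (enum S) < #|S|)%N by rewrite sX index_mem mem_enum.
  move=> /(_ (Ordinal xi)) /=; by rewrite nth_index ?mem_enum.
- move=> H; apply/freeP => k Hk i.
  pose c x := oapp k 0 (insub (index x (enum S)) : option 'I_#|S|).
  have cE : forall j : 'I_#|S|, c (nth x0 (enum S) j) = k j.
    move=> j; rewrite /c index_uniq ?enum_uniq -?sX //.
    by rewrite valK.
  have := H c; rewrite key.
  under eq_bigr => j _ do rewrite cE.
  move=> /(_ Hk (nth x0 (enum S) i)); rewrite cE; apply.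
  by rewrite -mem_enum mem_nth // -sX.
Qed.

Section Lin.
Variables (R : realType) (m n : nat).
Local Notation point := ('I_m * 'I_n)%type.

Definition vecp (x : point) : 'rV[R]_(m + n) :=
  delta_mx 0 (lshift n x.1) + delta_mx 0 (rshift m x.2).

Definition balanced (D : 'M[R]_(m, n)) :=
  (forall i, \sum_j D i j = 0) /\ (forall j, \sum_i D i j = 0).
Definition suppin (S : {set point}) (D : 'M[R]_(m, n)) :=
  forall i j, (i, j) \notin S -> D i j = 0.
Definition indep (S : {set point}) :=
  forall D, suppin S D -> balanced D -> D = 0.
Definition Xs (S : {set point}) := [seq vecp x | x <- enum S].

Lemma vecp_l x i : vecp x 0 (lshift n i) = (x.1 == i)%:R.
Proof.
by rewrite !mxE eqxx /= (inj_eq (@lshift_inj _ _)) eq_lrshift addr0 eq_sym.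
Qed.

Lemma vecp_r x j : vecp x 0 (rshift m j) = (x.2 == j)%:R.
Proof.
by rewrite !mxE eqxx /= (inj_eq (@rshift_inj _ _)) eq_rlshift add0r eq_sym.
Qed.

Lemma sum_pointE (F : point -> R) : \sum_(x : point) F x = \sum_i \sum_j F (i, j).
Proof. by rewrite pair_bigA; apply: eq_bigr => -[a b]. Qed.

Lemma comb_l (S : {set point}) (c : point -> R) i :
  (\sum_(x in S) c x *: vecp x) 0 (lshift n i) =
  \sum_j (if (i, j) \in S then c (i, j) else 0).
Proof.
rewrite summxE.
under eq_bigr => x _ do rewrite mxE vecp_l.
rewrite big_mkcond sum_pointE /= (bigD1 i) //= [X in _ + X]big1 ?addr0.
  by apply: eq_bigr => j _; rewrite eqxx mulr1.
move=> i' /negPf ne; rewrite big1 // => j _.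
by rewrite ne mulr0 if_same.
Qed.

Lemma comb_r (S : {set point}) (c : point -> R) j :
  (\sum_(x in S) c x *: vecp x) 0 (rshift m j) =
  \sum_i (if (i, j) \in S then c (i, j) else 0).
Proof.
rewrite summxE.
under eq_bigr => x _ do rewrite mxE vecp_r.
rewrite big_mkcond sum_pointE /= exchange_big /= (bigD1 j) //= [X in _ + X]big1 ?addr0.
  by apply: eq_bigr => i _; rewrite eqxx mulr1.
move=> j' /negPf ne; rewrite big1 // => i _.
by rewrite ne mulr0 if_same.
Qed.

Lemma indep_free (S : {set point}) (x0 : point) : indep S <-> free (Xs S).
Proof.
split.
- move=> HS; apply/(free_setP _ _ x0) => c Hc x xS.
  pose D := \matrix_(i, j) (if (i, j) \in S then c (i, j) else 0).
  have D0 : D = 0.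
    apply: HS.
      by move=> i j /negPf nS; rewrite mxE nS.
    split.
      move=> i; under eq_bigr => j _ do rewrite mxE.
      by rewrite -comb_l Hc mxE.
    move=> j; under eq_bigr => i _ do rewrite mxE.
    by rewrite -comb_r Hc mxE.
  have := congr1 (fun M : 'M_(m, n) => M x.1 x.2) D0.
  by rewrite !mxE -surjective_pairing xS.
- move=> /(free_setP _ _ x0) fr D sD [bl br].
  have H0 : \sum_(x in S) D x.1 x.2 *: vecp x = 0.
    apply/rowP => k; rewrite [RHS]mxE.
    case: (splitP k) => [i ki | j kj].
      have -> : k = lshift n i by apply: val_inj.
      rewrite comb_l -[RHS](bl i); apply: eq_bigr => j _.
      by case: ifP => // /negbT /sD ->.
    have -> : k = rshift m j by apply: val_inj.
    rewrite comb_r -[RHS](br j); apply: eq_bigr => i _.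
    by case: ifP => // /negbT /sD ->.
  apply/matrixP => i j; rewrite mxE.
  case: (boolP ((i, j) \in S)) => [ijS | /sD //].
  by have := fr _ H0 _ ijS.
Qed.

End Lin.

Section Dim.
Variables (R : realType) (m n : nat).
Local Notation point := ('I_m * 'I_n)%type.
Local Notation vecp := (@vecp R m n).
Local Notation Xs := (@Xs R m n).
Local Notation indep := (@indep R m n).

Lemma size_Xs (F : {set point}) : size (Xs F) = #|F|.
Proof. by rewrite size_map cardE. Qed.

Lemma mem_Xs (F : {set point}) x : x \in F -> vecp x \in <<Xs F>>%VS.
Proof. by move=> xF; apply: memv_span; apply: map_f; rewrite mem_enum. Qed.

Lemma span_all (F : {set point}) :
  (forall x, x \notin F -> ~~ free (Xs (x |: F))) -> free (Xs F) ->
  forall x, vecp x \in <<Xs F>>%VS.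
Proof.
move=> Hmax fF x; case: (boolP (x \in F)) => [/mem_Xs // | xF].
have := Hmax x xF.
have pe : perm_eq (Xs (x |: F)) (vecp x :: Xs F).
  rewrite /Xs -map_cons; apply: perm_map; apply: uniq_perm.
  - exact: enum_uniq.
  - by rewrite /= enum_uniq mem_enum xF.
  by move=> y; rewrite inE !mem_enum !inE.
by rewrite (perm_free pe) free_cons fF andbT negbK.
Qed.

Lemma span_phi (X : seq 'rV[R]_(m + n)) (u : 'cV[R]_(m + n)) w :
  w \in <<X>>%VS -> (forall x, x \in X -> x *m u = 0) -> w *m u = 0.
Proof.
move=> wX H; rewrite (@coord_span _ _ _ (in_tuple X) w wX) mulmx_suml.
apply: big1 => i _; rewrite -scalemxAl H ?scaler0 //.
by apply: mem_nth; case: i.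
Qed.

Section T0.
Variables (i0 : 'I_m) (j0 : 'I_n).
Definition T0 : {set point} := [set x : point | (x.1 == i0) || (x.2 == j0)].

Lemma T0_indep : indep T0.
Proof.
move=> D sD [bl br].
have Dout : forall i j, i != i0 -> j != j0 -> D i j = 0.
  move=> i j ni nj; apply: sD; by rewrite inE /= (negPf ni) (negPf nj).
have Dc : forall i, i != i0 -> D i j0 = 0.
  move=> i ni; rewrite -(bl i) (bigD1 j0) //= big1 ?addr0 // => j nj.
  exact: Dout.
have Dr : forall j, j != j0 -> D i0 j = 0.
  move=> j nj; rewrite -(br j) (bigD1 i0) //= big1 ?addr0 // => i ni.
  exact: Dout.
have D00 : D i0 j0 = 0.
  rewrite -(bl i0) (bigD1 j0) //= big1 ?addr0 // => j nj.
apply/matrixP => i j; rewrite mxE.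
case: (eqVneq i i0) => [-> | ni]; case: (eqVneq j j0) => [-> | nj] //.
- exact: Dr.
- exact: Dc.
- exact: Dout.
Qed.

Lemma T0_span x : vecp x \in <<Xs T0>>%VS.
Proof.
have -> : vecp x = vecp (x.1, j0) - vecp (i0, j0) + vecp (i0, x.2).
  by apply/rowP => k; rewrite !mxE /=; ring.
apply: memvD; first apply: memvB.
- by apply: mem_Xs; rewrite inE eqxx orbT.
- by apply: mem_Xs; rewrite inE eqxx.
- by apply: mem_Xs; rewrite inE eqxx.
Qed.

Lemma card_T0 : #|T0| = (m + n - 1)%N.
Proof.
have -> : T0 = [set x : point | x.1 == i0] :|: [set x : point | x.2 == j0].
  by apply/setP => x; rewrite !inE.
rewrite cardsU.
have -> : [set x : point | x.1 == i0] :&: [set x : point | x.2 == j0] = [set (i0, j0)].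
  apply/setP => -[a b]; rewrite !inE /= xpair_eqE //.
have -> : [set x : point | x.1 == i0] = finset.setX [set i0] [set: 'I_n].
  by apply/setP => -[a b]; rewrite !inE andbT.
have -> : [set x : point | x.2 == j0] = finset.setX [set: 'I_m] [set j0].
  by apply/setP => -[a b]; rewrite !inE.
rewrite !cardsX !cards1 !cardsT !card_ord mul1n muln1.
by rewrite addnC.
Qed.

Lemma card_max (F : {set point}) :
  free (Xs F) -> (forall x, vecp x \in <<Xs F>>%VS) -> #|F| = (m + n - 1)%N.
Proof.
move=> fF sp.
have fT0 : free (Xs T0) by apply: (proj1 (indep_free R T0 (i0, j0))); exact: T0_indep.
have eqs : (<<Xs F>> = <<Xs T0>>)%VS.
  apply/eqP; rewrite eqEsubv; apply/andP; split; apply/span_subvP => v /mapP [x _ ->].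
    exact: T0_span.
  exact: sp.
rewrite -card_T0 -!size_Xs.
move: fF fT0; rewrite /free eqs => /eqP <- /eqP <-. done.
Qed.
End T0.

End Dim.

Section Conn.
Variables (R : realType) (m n : nat).
Local Notation point := ('I_m * 'I_n)%type.
Local Notation vecp := (@vecp R m n).
Local Notation Xs := (@Xs R m n).

Lemma adjacent_sym : symmetric (@Defs.adjacent m n).
Proof. by move=> x y; rewrite /Defs.adjacent eq_sym [x.1 == _]eq_sym [x.2 == _]eq_sym. Qed.

Lemma vecp_mul x (u : 'cV[R]_(m + n)) :
  (vecp x *m u) 0 0 = u (lshift n x.1) 0 + u (rshift m x.2) 0.
Proof. by rewrite /vecp mulmxDl -!rowE !mxE. Qed.

Lemma conn_max (F : {set point}) y0 : y0 \in F ->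
  (forall x, vecp x \in <<Xs F>>%VS) -> connected_set F.
Proof.
move=> y0F sp.
pose e := (fun u v : point => [&& u \in F, v \in F & Defs.adjacent u v]).
have esym : symmetric e.
  by move=> u v; rewrite /e adjacent_sym; case: (u \in F); case: (v \in F).
have KF : forall z, connect e y0 z -> z \in F.
  move=> z /connectP [p pth ->]; move: pth.
  elim/last_ind: p => [_|p w _]; first exact: y0F.
  by rewrite rcons_path last_rcons => /andP[_ /and3P[_ ? _]].
pose RK := fun i => [exists z, connect e y0 z && (z.1 == i)].
pose CK := fun j => [exists z, connect e y0 z && (z.2 == j)].
have rowK : forall z, z \in F -> RK z.1 -> connect e y0 z.
  move=> z zF /existsP [w /andP [Kw /eqP wz]].
  case: (eqVneq w z) => [<- // | nwz].
  apply: (connect_trans (Kw)); apply: connect1.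
  by rewrite /e (KF w Kw) zF /Defs.adjacent nwz wz eqxx.
have colK : forall z, z \in F -> CK z.2 -> connect e y0 z.
  move=> z zF /existsP [w /andP [Kw /eqP wz]].
  case: (eqVneq w z) => [<- // | nwz].
  apply: (connect_trans (Kw)); apply: connect1.
  by rewrite /e (KF w Kw) zF /Defs.adjacent nwz wz eqxx orbT.
pose u : 'cV[R]_(m + n) := col_mx (\col_i (RK i)%:R) (\col_j - (CK j)%:R).
have H : forall x, x \in F -> vecp x *m u = 0.
  move=> x xF; apply/matrixP => a b; rewrite !ord1 vecp_mul /u col_mxEu col_mxEd !mxE.
  case: (boolP (connect e y0 x)) => Kx.
    have -> : RK x.1 by apply/existsP; exists x; rewrite Kx eqxx.
    have -> : CK x.2 by apply/existsP; exists x; rewrite Kx eqxx.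
    by rewrite addrN.
  have -> : RK x.1 = false by apply/negbTE; apply: contra Kx; exact: rowK.
  have -> : CK x.2 = false by apply/negbTE; apply: contra Kx; exact: colK.
  by rewrite oppr0 addr0.
have H' : forall v, v \in Xs F -> v *m u = 0.
  by move=> v /mapP [x xF ->]; apply: H; rewrite -mem_enum.
have EQ : forall x, RK x.1 = CK x.2.
  move=> x; have := span_phi (sp x) H'.
  move/(congr1 (fun M : 'M_(1, 1) => M 0 0)); rewrite vecp_mul /u col_mxEu col_mxEd !mxE.
  case: (RK x.1); case: (CK x.2) => //=.
    by rewrite oppr0 addr0 => /eqP; rewrite oner_eq0.
  by rewrite add0r => /eqP; rewrite oppr_eq0 oner_eq0.
have RK0 : RK y0.1 by apply/existsP; exists y0; rewrite connect0 eqxx.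
have CKall : forall j, CK j by move=> j; rewrite -(EQ (y0.1, j)).
have RKall : forall i, RK i by move=> i; rewrite (EQ (i, y0.2)).
move=> x y xF yF.
have Kx := rowK x xF (RKall _); have Ky := rowK y yF (RKall _).
apply: connect_trans Ky; by rewrite (sym_connect_sym esym).
Qed.

End Conn.

Lemma pairsum (R : zmodType) (f : nat -> R) h :
  \sum_(t < h.*2) f t = \sum_(u < h) (f u.*2 + f u.*2.+1).
Proof.
elim: h => [|h IH]; first by rewrite !big_ord0.
by rewrite doubleS !big_ord_recr /= IH addrA.
Qed.

Section F1.
Variables (R : realType) (m n : nat).
Local Notation point := ('I_m * 'I_n)%type.
Local Notation balanced := (@balanced R m n).
Local Notation suppin := (@suppin R m n).

Lemma sum_pt_row (x : point) i : \sum_j ((x == (i, j))%:R : R) = (x.1 == i)%:R.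
Proof.
case: x => a b /=; case: (eqVneq a i) => [-> | ne].
  rewrite (bigD1 b) //= eqxx big1 ?addr0 // => j nj.
  by rewrite xpair_eqE eqxx /= eq_sym (negPf nj).
by rewrite big1 // => j _; rewrite xpair_eqE (negPf ne).
Qed.

Lemma sum_pt_col (x : point) j : \sum_i ((x == (i, j))%:R : R) = (x.2 == j)%:R.
Proof.
case: x => a b /=; case: (eqVneq b j) => [-> | ne].
  rewrite (bigD1 a) //= eqxx big1 ?addr0 // => i ni.
  by rewrite xpair_eqE eqxx andbT eq_sym (negPf ni).
by rewrite big1 // => i _; rewrite xpair_eqE (negPf ne) andbF.
Qed.

Lemma alt_D (T : {set point}) (w : nat -> point) h : (0 < h)%N ->
  w h.*2 = w 0%N ->
  (forall u, (w u.*2).1 = (w u.*2.+1).1) ->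
  (forall u, (w u.*2.+1).2 = (w u.*2.+2).2) ->
  (forall t, (t < h.*2)%N -> w t = w 0%N -> t = 0%N) ->
  (forall t, w t \in T) ->
  exists D, [/\ suppin T D, balanced D & D != 0].
Proof.
move=> h0 per p1 p2 inj0 inT.
pose D := \matrix_(i, j) \sum_(t < h.*2) (-1) ^+ t * ((w t == (i, j))%:R : R).
exists D; split.
- move=> i j nT; rewrite mxE big1 // => t _.
  case: eqP => [wt|]; last by rewrite mulr0.
  by move: nT; rewrite -wt inT.
- split.
  + move=> i; under eq_bigr => j _ do rewrite mxE.
    rewrite exchange_big /=.
    under eq_bigr => t _ do rewrite -mulr_sumr sum_pt_row.
    rewrite (pairsum (fun t => (-1) ^+ t * ((w t).1 == i)%:R)).
    apply: big1 => u _.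
    by rewrite -signr_odd odd_double -[in X in _ + X]signr_odd /= odd_double p1 expr0 expr1 mul1r mulN1r addrN.
  + move=> j; under eq_bigr => i _ do rewrite mxE.
    rewrite exchange_big /=.
    under eq_bigr => t _ do rewrite -mulr_sumr sum_pt_col.
    rewrite (pairsum (fun t => (-1) ^+ t * ((w t).2 == j)%:R)).
    pose g u := (((w u.*2).2 == j)%:R : R).
    have -> : \sum_(u < h) ((-1) ^+ u.*2 * ((w u.*2).2 == j)%:R + (-1) ^+ u.*2.+1 * ((w u.*2.+1).2 == j)%:R)
       = \sum_(u < h) - (g u.+1 - g u).
      apply: eq_bigr => u _.
      rewrite -signr_odd odd_double -[in X in _ + X]signr_odd /= odd_double p2 expr0 expr1 mul1r mulN1r /g.
      by rewrite doubleS opprB.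
    rewrite sumrN -(big_mkord xpredT (fun u => g u.+1 - g u)) telescope_sumr // /g.
    by rewrite per double0 subrr oppr0.
- apply/negP => /eqP /matrixP /(_ (w 0%N).1 (w 0%N).2).
  have h2 : (0 < h.*2)%N by rewrite double_gt0.
  rewrite !mxE (bigD1 (Ordinal h2)) //= big1.
    by rewrite -surjective_pairing eqxx expr0 mulr1 addr0 => /eqP; rewrite oner_eq0.
  move=> t nt; case: eqP => [wt|]; last by rewrite mulr0.
  have t0 : val t = 0%N := inj0 t (ltn_ord t) (etrans wt (esym (surjective_pairing (w 0%N)))).
  by exfalso; move/negP: nt; apply; apply/eqP; apply: val_inj.
Qed.

Lemma circuit_D (T : {set point}) : has_circuit T ->
  exists D, [/\ suppin T D, balanced D & D != 0].
Proof.
case=> s [v [s4 vinj vT vadj vdif]].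
have s0 : (0 < s)%N by apply: leq_trans s4.
pose w t := v (Ordinal (ltn_pmod t s0)).
have wS : forall t, ordS (Ordinal (ltn_pmod t s0)) = Ordinal (ltn_pmod t.+1 s0).
  by move=> t; apply: val_inj => /=; rewrite -addn1 modnDml addn1.
have adjW t : Defs.adjacent (w t) (w t.+1) by rewrite /w -wS vadj.
have difW t : ((w t.+2).1 != (w t).1) /\ ((w t.+2).2 != (w t).2).
  by rewrite /w -wS -wS; apply: vdif.
have perW t : w (t + s)%N = w t.
  by rewrite /w; congr v; apply: val_inj => /=; rewrite modnDr.
have injW t t' : w t = w t' -> (t %% s = t' %% s)%N.
  by move/vinj/(congr1 val).
have inTw t : w t \in T by apply: vT.
pose row t := (w t).1 == (w t.+1).1.
have alt t : row t.+1 = ~~ row t.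
  have := adjW t; have := adjW t.+1; have [d1 d2] := difW t.
  rewrite /row /Defs.adjacent => /andP[_ a2] /andP[_ a1].
  case: (eqVneq (w t).1 (w t.+1).1) => r0; case: (eqVneq (w t.+1).1 (w t.+2).1) => r1 //=.
    by move: d1; rewrite -r1 -r0 eqxx.
  move: a1 a2; rewrite /= (negPf r0) (negPf r1) /= => /eqP c0 /eqP c1.
  by move: d2; rewrite -c1 -c0 eqxx.
have rowpar t : row t = row 0%N (+) odd t.
  by elim: t => [|t IH]; rewrite ?addbF // alt IH /= addbN.
have ev : ~~ odd s.
  have : row s = row 0%N by rewrite /row -[s]add0n perW -addSn perW.
  by rewrite rowpar; case: (row 0%N); case: (odd s).
have hs : (s./2).*2 = s by rewrite even_halfK.
have h0 : (0 < s./2)%N by rewrite -double_gt0 hs.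
pose o := if row 0%N then 0%N else 1%N.
have ro : row o by rewrite /o; case: ifP => // /negbT; rewrite alt.
have rowo : forall u, row (u.*2 + o)%N.
  by move=> u; rewrite rowpar oddD odd_double /= -rowpar.
have := @alt_D T (fun t => w (t + o)%N) s./2 h0.
apply => /=.
- by rewrite hs add0n addnC perW.
- by move=> u; apply/eqP; apply: rowo.
- move=> u; have := adjW (u.*2.+1 + o)%N; rewrite /Defs.adjacent => /andP[_].
  have : ~~ row (u.*2.+1 + o)%N by rewrite addSn alt rowo.
  by rewrite /row => /negPf -> /= /eqP; rewrite !addSn.
- move=> t lt /injW; rewrite hs in lt.
  rewrite -{2}[o]add0n => /eqP; rewrite eqn_modDr mod0n modn_small // => /eqP //.
- by [].
Qed.

End F1.

Lemma modD_inj s t a b : (a < s)%N -> (b < s)%N -> ((t + a) %% s = (t + b) %% s)%N -> a = b.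
Proof.
move=> ha hb /eqP; rewrite eqn_modDl !modn_small // => /eqP //.
Qed.

Section F2.
Variables (R : realType) (m n : nat).
Local Notation point := ('I_m * 'I_n)%type.
Local Notation VT := ('I_m + 'I_n)%type.
Variable (D : 'M[R]_(m, n)) (d : point).

Definition E (a b : VT) : bool :=
  match a, b with
  | inl i, inr j => D i j != 0
  | inr j, inl i => D i j != 0
  | _, _ => false
  end.

Definition cell (a b : VT) : point :=
  match a, b with
  | inl i, inr j => (i, j)
  | inr j, inl i => (i, j)
  | _, _ => d
  end.

Lemma E_sym : symmetric E.
Proof. by case=> [i|j] [i'|j']. Qed.

Lemma E_side a b : E a b -> is_inl a != is_inl b.
Proof. by case: a => [i|j]; case: b. Qed.

Lemma cellE a b : E a b ->
  (a = inl (cell a b).1 /\ b = inr (cell a b).2) \/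
  (a = inr (cell a b).2 /\ b = inl (cell a b).1).
Proof. by case: a => [i|j]; case: b => [i'|j'] //= _; [left|right]. Qed.

Lemma cell_D a b : E a b -> D (cell a b).1 (cell a b).2 != 0.
Proof. by case: a => [i|j]; case: b. Qed.

Lemma cellL a b r : E a b -> a = inl r \/ b = inl r -> (cell a b).1 = r.
Proof.
by case: a => [i|j]; case: b => [i'|j'] //= _ [] // [] ->.
Qed.

Lemma cellR a b r : E a b -> a = inr r \/ b = inr r -> (cell a b).2 = r.
Proof.
by case: a => [i|j]; case: b => [i'|j'] //= _ [] // [] ->.
Qed.

Lemma cycle_circuit (T : {set point}) (dv : VT) (c : seq VT) :
  (forall i j, (i, j) \notin T -> D i j = 0) ->
  uniq c -> (3 <= size c)%N ->
  (forall k, (k.+1 < size c)%N -> E (nth dv c k) (nth dv c k.+1)) ->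
  E (nth dv c (size c).-1) (nth dv c 0) ->
  has_circuit T.
Proof.
move=> sD uc c3 Ep El.
set s := size c.
have s0 : (0 < s)%N by apply: leq_trans c3.
pose g t := nth dv c (t %% s).
have gD t a : g (t %% s + a)%N = g (t + a)%N by rewrite /g modnDml.
have gE t : E (g t) (g t.+1).
  rewrite /g -addn1 -modnDml addn1.
  have := ltn_pmod t s0; set k := (t %% s)%N => ks.
  case: (ltnP k.+1 s) => k1.
    by rewrite (modn_small k1); exact: Ep.
  have ke : k.+1 = s by apply/eqP; rewrite eqn_leq ks k1.
  rewrite ke modnn; have -> : k = s.-1 by rewrite -ke.
  exact: El.
have ginj t t' : g t = g t' -> (t %% s = t' %% s)%N.
  by move/eqP; rewrite /g nth_uniq ?ltn_pmod // => /eqP.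
have s4 : (4 <= s)%N.
  rewrite ltn_neqAle c3 andbT; apply/eqP => s3.
  have := E_side (gE 0%N); have := E_side (gE 1%N); have := E_side (gE 2%N).
  have -> : g 3%N = g 0%N by rewrite /g -s3 modnn mod0n.
  by case: (is_inl (g 0%N)); case: (is_inl (g 1%N)); case: (is_inl (g 2%N)).
pose v (k : 'I_s) := cell (g k) (g k.+1).
have vS : forall k : 'I_s, forall a, g ((ordS k) + a)%N = g (k.+1 + a)%N.
  by move=> k a; rewrite /= gD.
have vinj : injective v.
  move=> k l; rewrite /v => e.
  have ks := ltn_ord k; have ls := ltn_ord l.
  apply: val_inj => /=.
  have s2 : (2 < s)%N by apply: leq_trans s4.
  move: (cellE (gE k)) (cellE (gE l)); rewrite e.
  set C := cell (g l) (g l.+1).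
  case=> -[ek ek1]; case=> -[el el1].
  - by move: (ginj _ _ (etrans ek (esym el))); rewrite !modn_small.
  - exfalso.
    have h1 := ginj _ _ (etrans ek (esym el1)).
    have h2 := ginj _ _ (etrans ek1 (esym el)).
    have : ((l + 0) %% s = (l + 2) %% s)%N.
      by rewrite addn0 -h2 -addn1 -modnDml h1 modnDml addn1 addn2.
    by move/(@modD_inj s l 0 2 s0 s2).
  - exfalso.
    have h1 := ginj _ _ (etrans ek (esym el1)).
    have h2 := ginj _ _ (etrans ek1 (esym el)).
    have : ((l + 0) %% s = (l + 2) %% s)%N.
      by rewrite addn0 -h2 -addn1 -modnDml h1 modnDml addn1 addn2.
    by move/(@modD_inj s l 0 2 s0 s2).
  - by move: (ginj _ _ (etrans ek (esym el))); rewrite !modn_small.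
have geq t t' : (t %% s = t' %% s)%N -> g t = g t' by rewrite /g => ->.
have modS1 t : ((t %% s).+1 %% s = t.+1 %% s)%N by rewrite -addn1 modnDml addn1.
have vO (k : 'I_s) : v (ordS k) = cell (g k.+1) (g k.+2).
  by rewrite /v /=; congr cell; apply: geq; rewrite ?modn_mod // -addn1 modnDml addn1.
have vOO (k : 'I_s) : v (ordS (ordS k)) = cell (g k.+2) (g k.+3).
  rewrite /v /=; congr cell; apply: geq; rewrite ?modn_mod.
    by rewrite -addn1 modnDml addn1.
  by rewrite modS1 -addn2 modnDml addn2.
have noeq (k i j : nat) : (i < j)%N -> (j < 4)%N -> g (k + i)%N != g (k + j)%N.
  move=> ij j4; apply/negP => /eqP /ginj /modD_inj.
  have js : (j < s)%N by apply: leq_trans s4.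
  by move=> /(_ (ltn_trans ij js) js) ie; move: ij; rewrite ie ltnn.
exists s, v; split => //.
- move=> k; case: (boolP (v k \in T)) => // nT.
  by move: (cell_D (gE k)); rewrite sD ?eqxx // -surjective_pairing.
- move=> k; rewrite vO /Defs.adjacent; apply/andP; split.
    rewrite -vO; apply/negP => /eqP /vinj /(congr1 val) /= h.
    have ks := ltn_ord k.
    case: (ltnP k.+1 s) => k1.
      by move: h; rewrite modn_small // => /eqP; rewrite eqn_leq ltnn andbF.
    have ke : k.+1 = s by apply/eqP; rewrite eqn_leq ks k1.
    move: h; rewrite ke modnn => h0.
    by move: s4; have -> : s = 1%N by rewrite -ke h0.
  rewrite /v; move: (erefl (g k.+1)); case: {2}(g k.+1) => [r|c0] e1.
    by rewrite (cellL (gE k) (or_intror e1)) (cellL (gE k.+1) (or_introl e1)) eqxx.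
  by rewrite (cellR (gE k) (or_intror e1)) (cellR (gE k.+1) (or_introl e1)) eqxx orbT.
- move=> k; rewrite vOO /v; split.
  + apply/eqP => er.
    case: (cellE (gE k)) => -[e1 e2]; case: (cellE (gE k.+2)) => -[e3 e4]; rewrite er in e3 e4.
    * by move: (noeq k 0 2 isT isT); rewrite addn0 addn2 e1 e3 eqxx.
    * by move: (noeq k 0 3 isT isT); rewrite addn0 addn3 e1 e4 eqxx.
    * by move: (noeq k 1 2 isT isT); rewrite addn1 addn2 e2 e3 eqxx.
    * by move: (noeq k 1 3 isT isT); rewrite addn1 addn3 e2 e4 eqxx.
  + apply/eqP => er.
    case: (cellE (gE k)) => -[e1 e2]; case: (cellE (gE k.+2)) => -[e3 e4]; rewrite er in e3 e4.
    * by move: (noeq k 1 3 isT isT); rewrite addn1 addn3 e2 e4 eqxx.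
    * by move: (noeq k 1 2 isT isT); rewrite addn1 addn2 e2 e3 eqxx.
    * by move: (noeq k 0 3 isT isT); rewrite addn0 addn3 e1 e4 eqxx.
    * by move: (noeq k 0 2 isT isT); rewrite addn0 addn2 e1 e3 eqxx.
Qed.


End F2.

Section F2b.
Variables (R : realType) (m n : nat).
Local Notation point := ('I_m * 'I_n)%type.
Local Notation VT := ('I_m + 'I_n)%type.

Lemma nocircuit_indep (T : {set point}) : ~ has_circuit T -> @indep R m n T.
Proof.
move=> nc D sD [bl br].
case: (eqVneq D 0) => // Dn0; exfalso.
have : ~~ [forall ij : point, D ij.1 ij.2 == 0].
  apply: contra Dn0 => /forallP H; apply/eqP/matrixP => i j.
  by rewrite mxE; apply/eqP; exact: (H (i, j)).
rewrite negb_forall => /existsP [[i0 j0] /= Dij].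
pose d : point := (i0, j0).
pose e := E D.
have deg : forall a b, e a b -> exists2 c, c != b & e a c.
  case=> [i|j] [i'|j'] //= Hab.
  - case: (boolP [exists j'', (j'' != j') && (D i j'' != 0)]) => [/existsP [j'' /andP [ne Dn]] | H].
      by exists (inr j'') => //; apply/eqP => -[ej]; move: ne; rewrite ej eqxx.
    move: (bl i); rewrite (bigD1 j') //= big1 ?addr0 => [/eqP | k nk]; first by rewrite (negPf Hab).
    move: H; rewrite negb_exists => /forallP /(_ k); rewrite nk /= negbK => /eqP //.
  - case: (boolP [exists i'', (i'' != i') && (D i'' j != 0)]) => [/existsP [i'' /andP [ne Dn]] | H].
      by exists (inl i'') => //; apply/eqP => -[ej]; move: ne; rewrite ej eqxx.
    move: (br j); rewrite (bigD1 i') //= big1 ?addr0 => [/eqP | k nk]; first by rewrite (negPf Hab).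
    move: H; rewrite negb_exists => /forallP /(_ k); rewrite nk /= negbK => /eqP //.
have esym : symmetric e by exact: E_sym.
have paths : forall L, exists x p, [/\ path e x p, uniq (x :: p) & size p = L.+1].
  elim=> [|L [x [p [pth up sp]]]].
    by exists (inl i0), [:: inr j0]; rewrite /= Dij.
  case: p pth up sp => [//|y p'] pth up sp.
  have exy : e x y by case/andP: pth.
  have [c cy exc] := deg x y exy.
  case: (boolP (c \in x :: y :: p')) => cin; last first.
    exists c, (x :: y :: p'); split => //.
    - by rewrite /= esym exc.
    - by rewrite /= cin.
    - by move: sp => /= ->.
  exfalso; apply: nc.
  have cx : c != x.
    by apply/eqP => ecx; move: (E_side exc); rewrite ecx eqxx.
  have cp : c \in p' by move: cin; rewrite !inE (negPf cx) (negPf cy).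
  set N := (index c p').+3.
  have Nle : (N <= size (x :: y :: p'))%N by rewrite /N /= !ltnS index_mem.
  apply: (@cycle_circuit R m n D d T x (take N (x :: y :: p'))).
  - exact: sD.
  - exact: take_uniq.
  - by rewrite size_takel.
  - move=> k; rewrite size_takel // => kN.
    rewrite !nth_take // ?(ltnW kN) //.
    move/pathP: pth => /(_ x k) /=; apply.
    by move: Nle; rewrite /= => /(leq_trans kN).
  - rewrite size_takel // !nth_take //= ?nth_index //.
    by rewrite E_sym.
have [x [p [_ up sp]]] := paths (m + n)%N.
move: (max_card (mem (x :: p))); rewrite (card_uniqP up) /= sp card_sum !card_ord.
by rewrite ltnNge leqW ?leqnSn.
Qed.

End F2b.

Section Ext.
Variables (R : realType) (m n : nat).
Local Notation point := ('I_m * 'I_n)%type.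
Local Notation Xs := (@Xs R m n).
Local Notation indep := (@indep R m n).

Lemma extend (S : {set point}) (x0 : point) : x0 \in S -> indep S ->
  exists T : {set point}, [/\ is_tree T, #|T| = (m + n - 1)%N & S \subset T].
Proof.
move=> x0S iS.
have fS : free (Xs S) := (indep_free R S x0).1 iS.
pose P (F : {set point}) := (S \subset F) && free (Xs F).
have PS : P S by rewrite /P subxx fS.
case: (@arg_maxnP _ S P (fun F : {set point} => #|F|) PS) => F /andP [SF fF] Fmax.
have Hmax : forall x, x \notin F -> ~~ free (Xs (x |: F)).
  move=> x xF; apply/negP => fx.
  have := Fmax (x |: F); rewrite /P fx andbT (fintype.subset_trans SF (finset.subsetU1 x F)).
  by move=> /(_ isT) /=; rewrite cardsU1 xF add1n ltnn.
have sp := span_all Hmax fF.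
exists F; split => //.
- split; first exact: (@conn_max R m n F x0 (fintype.subsetP SF x0 x0S) sp).
  move=> hc; have [D [sD bD Dn]] := circuit_D R hc.
  have iF := (indep_free R F x0).2 fF.
  by move/eqP: Dn; apply; apply: iF.
- exact: (card_max x0.1 x0.2 fF sp).
Qed.

End Ext.

Section Pow.
Variable R : realType.

Lemma powR_lt_lin (a b : R) : 0 < b < 1 -> 0 < a -> a != 1 ->
  powR a b < 1 + b * (a - 1).
Proof.
move=> /andP [b0 b1] a0 a1.
rewrite /powR gt_eqF //.
set L := ln a.
have aE : a = expR L by rewrite /L lnK.
have L0 : L != 0 by apply: contra a1 => /eqP L0; rewrite aE L0 expR0.
have e2 : 1 + (1 - b) * L < expR ((1 - b) * L).
  by apply: expR_gt1Dx; rewrite mulf_neq0 // subr_eq0 eq_sym lt_eqF.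
have e3 : 1 + (- (b * L)) < expR (- (b * L)).
  by apply: expR_gt1Dx; rewrite oppr_eq0 mulf_neq0 // gt_eqF.
have E1 : 0 < expR (b * L) by apply: expR_gt0.
have eL : expR L = expR (b * L) * expR ((1 - b) * L).
  by rewrite -expRD; congr expR; ring.
have e13 : expR (b * L) * expR (- (b * L)) = 1 by rewrite -expRD subrr expR0.
have h1 : expR (b * L) * (1 + (1 - b) * L) < expR (b * L) * expR ((1 - b) * L).
  by rewrite ltr_pM2l.
have h2 : expR (b * L) * (1 + (- (b * L))) < 1.
  by rewrite -[X in _ < X]e13 ltr_pM2l.
have h1' : b * (expR (b * L) * (1 + (1 - b) * L)) < b * (expR (b * L) * expR ((1 - b) * L)) by rewrite ltr_pM2l.
have b1' : 0 < 1 - b by rewrite subr_gt0.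
have h2' : (1 - b) * (expR (b * L) * (1 + (- (b * L)))) < (1 - b) * 1 by rewrite ltr_pM2l.
rewrite [X in _ * (X - 1)]aE eL.
move: h1' h2'; set E := expR (b * L); set F := expR ((1 - b) * L) => h1' h2'.
nra.
Qed.

Lemma powR_gt_lin (a b : R) : 1 < b -> 0 < a -> a != 1 ->
  1 + b * (a - 1) < powR a b.
Proof.
move=> b1 a0 a1.
have b0 : 0 < b by apply: lt_trans b1.
set c := powR a b.
have c0 : 0 < c by apply: powR_gt0.
have ca : powR c b^-1 = a by rewrite /c -powRrM mulfV ?gt_eqF // powRr1 // ltW.
have c1 : c != 1 by apply: contra a1 => /eqP c1; rewrite -ca c1 powR1.
have bi : 0 < b^-1 < 1 by rewrite invr_gt0 b0 /= invf_lt1.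
have := powR_lt_lin bi c0 c1; rewrite ca => h.
rewrite -(ltr_pM2l b0) mulrDr mulrA mulfV ?gt_eqF // mul1r in h.
lra.
Qed.

Lemma pow_pair_lt1 (al x d : R) : 0 < al < 1 -> 0 < x -> 0 < x + d -> 0 < x - d ->
  d != 0 -> powR (x + d) al + powR (x - d) al < 2 * powR x al.
Proof.
move=> al01 x0 xd1 xd2 d0.
have xn0 : x != 0 by rewrite gt_eqF.
have e1 : powR (x + d) al = powR ((x + d) / x) al * powR x al.
  by rewrite -powRM ?divfK // ltW // divr_gt0.
have e2 : powR (x - d) al = powR ((x - d) / x) al * powR x al.
  by rewrite -powRM ?divfK // ltW // divr_gt0.
have hv : (x - d) / x = 2 - (x + d) / x by field.
have n1 : (x + d) / x != 1.
  by apply: contra d0 => /eqP h; move: (divfK xn0 (x + d)); rewrite h mul1r => hh; apply/eqP; lra.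
have n2 : (x - d) / x != 1.
  by apply: contra d0 => /eqP h; move: (divfK xn0 (x - d)); rewrite h mul1r => hh; apply/eqP; lra.
have k1 := powR_lt_lin al01 (divr_gt0 xd1 x0) n1.
have k2 := powR_lt_lin al01 (divr_gt0 xd2 x0) n2.
rewrite hv in k2.
have X0 : 0 < powR x al by apply: powR_gt0.
rewrite e1 e2 hv.
move: k1 k2 X0; set u := (x + d) / x; set X := powR x al; set pu := powR u al; set pv := powR _ al.
move=> k1 k2 X0.
have h1 : pu * X < (1 + al * (u - 1)) * X by rewrite ltr_pM2r.
have h2 : pv * X < (1 + al * (2 - u - 1)) * X by rewrite ltr_pM2r.
have hs : (1 + al * (u - 1)) * X + (1 + al * (2 - u - 1)) * X = 2 * X by ring.
lra.
Qed.

Lemma pow_pair_gt1 (al x d : R) : 1 < al -> 0 < x -> 0 < x + d -> 0 < x - d ->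
  d != 0 -> 2 * powR x al < powR (x + d) al + powR (x - d) al.
Proof.
move=> al1 x0 xd1 xd2 d0.
have xn0 : x != 0 by rewrite gt_eqF.
have e1 : powR (x + d) al = powR ((x + d) / x) al * powR x al.
  by rewrite -powRM ?divfK // ltW // divr_gt0.
have e2 : powR (x - d) al = powR ((x - d) / x) al * powR x al.
  by rewrite -powRM ?divfK // ltW // divr_gt0.
have hv : (x - d) / x = 2 - (x + d) / x by field.
have n1 : (x + d) / x != 1.
  by apply: contra d0 => /eqP h; move: (divfK xn0 (x + d)); rewrite h mul1r => hh; apply/eqP; lra.
have n2 : (x - d) / x != 1.
  by apply: contra d0 => /eqP h; move: (divfK xn0 (x - d)); rewrite h mul1r => hh; apply/eqP; lra.
have k1 := powR_gt_lin al1 (divr_gt0 xd1 x0) n1.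
have k2 := powR_gt_lin al1 (divr_gt0 xd2 x0) n2.
rewrite hv in k2.
have X0 : 0 < powR x al by apply: powR_gt0.
rewrite e1 e2 hv.
move: k1 k2 X0; set u := (x + d) / x; set X := powR x al; set pu := powR u al; set pv := powR _ al.
move=> k1 k2 X0.
have h1 : (1 + al * (u - 1)) * X < pu * X by rewrite ltr_pM2r.
have h2 : (1 + al * (2 - u - 1)) * X < pv * X by rewrite ltr_pM2r.
have hs : (1 + al * (u - 1)) * X + (1 + al * (2 - u - 1)) * X = 2 * X by ring.
lra.
Qed.

End Pow.

Section Ent.
Variables (R : realType) (m n : nat) (p : 'I_m -> R) (q : 'I_n -> R).
Local Notation point := ('I_m * 'I_n)%type.
Local Notation transport := (@transport R m n p q).
Local Notation power_sum := (@power_sum R m n).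
Local Notation entropy := (@entropy R m n).

Hypothesis p0 : forall i, 0 < p i.
Hypothesis p1 : \sum_i p i = 1.

Lemma le_sumD (F : 'I_n -> R) j : (forall j, 0 <= F j) -> F j <= \sum_j F j.
Proof.
move=> F0; rewrite (bigD1 j) //= lerDl; apply: sumr_ge0 => k _; exact: F0.
Qed.

Lemma tr_le1 P : transport P -> forall i j, P i j <= 1.
Proof.
case=> P0 Pr Pc i j.
apply: le_trans (le_sumD j (P0 i)) _; rewrite Pr -p1.
rewrite (bigD1 i) //= lerDl; apply: sumr_ge0 => k _; exact: ltW.
Qed.

Lemma tr_sum1 P : transport P -> \sum_i \sum_j P i j = 1.
Proof. by case=> _ Pr _; rewrite -p1; apply: eq_bigr => i _; rewrite Pr. Qed.

Lemma sum_nz (F : 'I_n -> R) : \sum_(j | F j != 0) F j = \sum_j F j.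
Proof. by rewrite big_mkcond; apply: eq_bigr => j _; case: eqP. Qed.

Lemma psum_ge1 al P : 0 <= al -> al <= 1 -> transport P -> 1 <= power_sum al P.
Proof.
move=> a0 a1 tP; rewrite -(tr_sum1 tP) /power_sum.
apply: ler_sum => i _; rewrite -sum_nz; apply: ler_sum => j Pn.
have Pg : 0 < P i j by rewrite lt0r Pn; case: tP => P0 _ _; exact: P0.
rewrite -{1}(powRr1 (ltW Pg)); apply: ger_powR => //.
by rewrite Pg tr_le1.
Qed.

Lemma psum_le1 al P : 1 <= al -> transport P -> power_sum al P <= 1.
Proof.
move=> a1 tP; rewrite -(tr_sum1 tP) /power_sum.
apply: ler_sum => i _; rewrite -sum_nz; apply: ler_sum => j Pn.
have Pg : 0 < P i j by rewrite lt0r Pn; case: tP => P0 _ _; exact: P0.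
rewrite -[X in _ <= X](powRr1 (ltW Pg)); apply: ger_powR => //.
by rewrite Pg tr_le1.
Qed.

Definition gk (k : entropy_kind) (al s : R) :=
  match k with
  | Renyi => (1 - al)^-1 * ln s
  | Tsallis => (1 - al)^-1 * (s - 1)
  end.

Lemma entropyE k al P : entropy k al P = gk k al (power_sum al P).
Proof. by case: k. Qed.

Lemma ent_ge0 k al P : 0 <= al -> al != 1 -> transport P -> 0 <= entropy k al P.
Proof.
move=> a0 a1 tP; rewrite entropyE.
case: (ltgtP al 1) => [alt|agt|]; last by move/eqP: a1.
- have c0 : 0 < (1 - al)^-1 by rewrite invr_gt0 subr_gt0.
  have s1 := psum_ge1 a0 (ltW alt) tP.
  case: k => /=; apply: mulr_ge0; rewrite ?(ltW c0) //.
    exact: ln_ge0.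
  by rewrite subr_ge0.
- have c0 : (1 - al)^-1 < 0 by rewrite invr_lt0 subr_lt0.
  have s1 := psum_le1 (ltW agt) tP.
  case: k => /=; apply: mulr_le0; rewrite ?(ltW c0) //.
    exact: ln_le0.
  by rewrite subr_le0.
Qed.

Lemma gk_lt1 k al s1 s2 : al < 1 -> 0 < s1 -> s1 < s2 -> gk k al s1 < gk k al s2.
Proof.
move=> a1 s10 s12.
have c0 : 0 < (1 - al)^-1 by rewrite invr_gt0 subr_gt0.
case: k => /=; rewrite ltr_pM2l //.
  by rewrite ltr_ln // posrE // (lt_trans s10 s12).
by rewrite ltrD2r.
Qed.

Lemma gk_gt1 k al s1 s2 : 1 < al -> 0 < s2 -> s2 < s1 -> gk k al s1 < gk k al s2.
Proof.
move=> a1 s20 s21.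
have c0 : (1 - al)^-1 < 0 by rewrite invr_lt0 subr_lt0.
case: k => /=; rewrite ltr_nM2l //.
  by rewrite ltr_ln // posrE // (lt_trans s20 s21).
by rewrite ltrD2r.
Qed.

Lemma psum_pos al (P : 'M[R]_(m, n)) i0 j0 : (forall i j, 0 <= P i j) -> P i0 j0 != 0 -> 0 < power_sum al P.
Proof.
move=> P0 Pn; rewrite /power_sum (bigD1 i0) //= (bigD1 j0) //=.
rewrite -addrA ltr_pwDl ?powR_gt0 //; first by rewrite lt0r Pn P0.
apply: addr_ge0; apply: sumr_ge0 => *; rewrite ?powR_ge0 //.
by apply: sumr_ge0 => *; rewrite powR_ge0.
Qed.

Lemma tr_nzrow (P : 'M[R]_(m, n)) i : transport P -> exists j, P i j != 0.
Proof.
case=> _ Pr _.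
case: (boolP [exists j, P i j != 0]) => [/existsP [j] Pj|]; first by exists j.
rewrite negb_exists => /forallP H.
have : \sum_j P i j = 0 by apply: big1 => j _; move: (H j); rewrite negbK => /eqP.
by rewrite Pr => p0'; move: (p0 i); rewrite p0' ltxx.
Qed.

End Ent.

Lemma fin_pos_lb (R : realType) (T : finType) (P : pred T) (f : T -> R) :
  (forall x, P x -> 0 < f x) -> exists2 e, 0 < e & forall x, P x -> e <= f x.
Proof.
move=> fP; case: (pickP P) => [x0 Px0 | P0]; last by exists 1 => // x; rewrite P0.
case: (arg_minP f Px0) => y Py ymin.
by exists (f y); [exact: fP | exact: ymin].
Qed.

Section Pert.
Variables (R : realType) (m n : nat) (p : 'I_m -> R) (q : 'I_n -> R).
Local Notation point := ('I_m * 'I_n)%type.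
Local Notation transport := (@transport R m n p q).
Local Notation balanced := (@balanced R m n).

Lemma tr_add (P D : 'M[R]_(m, n)) t : transport P -> balanced D ->
  (forall i j, 0 <= P i j + t * D i j) -> transport (P + t *: D).
Proof.
case=> P0 Pr Pc [bl br] H; split.
- by move=> i j; rewrite !mxE.
- move=> i; under eq_bigr => j _ do rewrite !mxE.
  by rewrite big_split /= -mulr_sumr bl mulr0 addr0 Pr.
- move=> j; under eq_bigr => i _ do rewrite !mxE.
  by rewrite big_split /= -mulr_sumr br mulr0 addr0 Pc.
Qed.

Lemma pert_eps (P D : 'M[R]_(m, n)) : (forall i j, 0 <= P i j) ->
  exists2 e, 0 < e & forall i j, P i j != 0 -> e * `|D i j| < P i j.
Proof.
move=> P0.
have := @fin_pos_lb R point (fun x => P x.1 x.2 != 0) (fun x => P x.1 x.2 / (1 + `|D x.1 x.2|)).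
case.
  move=> x Pn; apply: divr_gt0; first by rewrite lt0r Pn P0.
  by apply: ltr_pwDl.
move=> e e0 He; exists e => // i j Pn.
have := He (i, j) Pn; rewrite /= ler_pdivlMr; last by apply: ltr_pwDl.
by move=> h; nra.
Qed.

Lemma sum2_lt (F G : 'I_m -> 'I_n -> R) (P : 'I_m -> 'I_n -> bool) i0 j0 :
  P i0 j0 -> (forall i j, P i j -> F i j <= G i j) -> F i0 j0 < G i0 j0 ->
  \sum_i \sum_(j | P i j) F i j < \sum_i \sum_(j | P i j) G i j.
Proof.
move=> P00 le lt.
rewrite (bigD1 i0) //= [X in _ < X](bigD1 i0) //=.
apply: ltr_leD.
  rewrite (bigD1 j0) //= [X in _ < X](bigD1 j0) //=.
  apply: ltr_leD => //; apply: ler_sum => j /andP [Pj _]; exact: le.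
by apply: ler_sum => i _; apply: ler_sum => j Pj; exact: le.
Qed.

End Pert.

Lemma pm_pos (R : realType) (e x d : R) : 0 < e -> e * `|d| < x -> 0 < x + e * d /\ 0 < x + (- e) * d.
Proof.
move=> e0 h.
have h1 : d <= `|d| := ler_norm d.
have h2 : - d <= `|d| by rewrite -normrN ler_norm.
split; nra.
Qed.

Section Main.
Variables (R : realType) (m n : nat) (p : 'I_m -> R) (q : 'I_n -> R).
Local Notation point := ('I_m * 'I_n)%type.
Local Notation transport := (@transport R m n p q).
Local Notation balanced := (@balanced R m n).
Local Notation indep := (@indep R m n).

Lemma in_supportM (P : 'M[R]_(m, n)) i j : ((i, j) \in Defs.support P) = (P i j != 0).
Proof. by rewrite inE. Qed.

Lemma tree_extreme P : tree_transport p q P -> extreme p q P.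
Proof.
case=> tP [T [[conn nc] cT sub]]; split => // A B t tA tB /andP [t0 t1] eP.
have iT := @nocircuit_indep R m n T nc.
have : A - B = 0.
  apply: iT.
  - move=> i j nT.
    have P0 : P i j = 0.
      apply/eqP; move: nT; apply: contraR; rewrite -in_supportM; exact: (fintype.subsetP sub).
    have := congr1 (fun M : 'M_(m, n) => M i j) eP; rewrite !mxE P0 => h.
    have [A0 _ _] := tA; have [B0 _ _] := tB.
    have a0 := A0 i j; have b0 := B0 i j.
    have ha : A i j = 0 by nra.
    have hb : B i j = 0 by nra.
    by rewrite ?mxE ha hb subrr.
  - have [_ Ar Ac] := tA; have [_ Br Bc] := tB; split.
      by move=> i; under eq_bigr => j _ do rewrite !mxE; rewrite sumrB Ar Br subrr.
    by move=> j; under eq_bigr => i _ do rewrite !mxE; rewrite sumrB Ac Bc subrr.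
by move/eqP; rewrite subr_eq0 => /eqP.
Qed.

Lemma extreme_indep P : extreme p q P -> indep (Defs.support P).
Proof.
case=> tP ext D sD bD.
case: (eqVneq D 0) => // Dn0; exfalso.
have [P0 _ _] := tP.
have [e e0 He] := pert_eps D P0.
have sD' : forall i j, P i j = 0 -> D i j = 0.
  by move=> i j Pz; apply: sD; rewrite in_supportM Pz eqxx.
have nn : forall s, s = e \/ s = - e -> forall i j, 0 <= P i j + s * D i j.
  move=> s hs i j; case: (eqVneq (P i j) 0) => [Pz | Pn].
    by rewrite Pz (sD' _ _ Pz) mulr0 addr0.
  have [h1 h2] := pm_pos e0 (He i j Pn).
  by case: hs => ->; apply: ltW.
have tA := tr_add tP bD (nn e (or_introl erefl)).
have tB := tr_add tP bD (nn (- e) (or_intror erefl)).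
have eP : P = (1 / 2) *: (P + e *: D) + (1 - 1 / 2) *: (P + (- e) *: D).
  by apply/matrixP => i j; rewrite !mxE; field.
have h12 : 0 < (1 / 2 : R) < 1 by apply/andP; split; lra.
have := ext _ _ _ tA tB h12 eP.
move/(congr1 (fun M : 'M_(m, n) => M)) => eAB.
apply/negP: Dn0; apply/negPn/eqP/matrixP => i j.
have := congr1 (fun M : 'M_(m, n) => M i j) eAB; rewrite !mxE => h.
have : e * D i j = 0 by lra.
move/eqP; rewrite mulf_eq0 (gt_eqF e0) /= => /eqP ->. reflexivity.
Qed.

Lemma psum0 (P : 'M[R]_(m, n)) :
  power_sum 0 P = \sum_i \sum_j ((P i j != 0)%:R : R).
Proof.
rewrite /power_sum; apply: eq_bigr => i _; rewrite big_mkcond.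
by apply: eq_bigr => j _; rewrite powRr0; case: ifP.
Qed.

Lemma min_indep (al : R) (k : entropy_kind) Pt (i0 : 'I_m) :
  (forall i, 0 < p i) -> 0 <= al -> al != 1 -> transport Pt ->
  (forall P, transport P -> entropy k al Pt <= entropy k al P) ->
  indep (Defs.support Pt).
Proof.
move=> p0 a0 a1 tP minP D sD bD.
case: (eqVneq D 0) => // Dn0; exfalso.
have [P0 _ _] := tP.
have sD' : forall i j, Pt i j = 0 -> D i j = 0.
  by move=> i j Pz; apply: sD; rewrite in_supportM Pz eqxx.
have : ~~ [forall x : point, D x.1 x.2 == 0].
  apply: contra Dn0 => /forallP H; apply/eqP/matrixP => i j.
  by rewrite mxE; apply/eqP; exact: (H (i, j)).
rewrite negb_forall => /existsP [[i1 j1] /= D1].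
have Pt1 : Pt i1 j1 != 0 by apply: contra D1 => /eqP /sD' ->.
have contr : forall Q, transport Q -> entropy k al Q < entropy k al Pt -> False.
  by move=> Q tQ lt; move: (minP _ tQ); rewrite leNgt lt.
case: (eqVneq al 0) => [al0 | aln0].
- (* zeroing *)
  have [x2 Dneg] : exists x : point, D x.1 x.2 < 0.
    case: (boolP [exists x : point, D x.1 x.2 < 0]) => [/existsP [x hx] | H]; first by exists x.
    exfalso.
    have Dge : forall i j, 0 <= D i j.
      by move=> i j; move: H; rewrite negb_exists => /forallP /(_ (i, j)); rewrite -leNgt.
    have [bl _] := bD.
    have := @psumr_eq0P _ _ xpredT (fun j => D i1 j) (fun j _ => Dge i1 j) (bl i1) j1 isT.
    by move/eqP; rewrite (negPf D1).
  pose f := fun x : point => Pt x.1 x.2 / - D x.1 x.2.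
  case: (@arg_minP _ _ _ x2 (fun x : point => D x.1 x.2 < 0) f Dneg) => xs Dxs xsmin.
  set t := f xs.
  have t0 : 0 <= t by rewrite /t /f divr_ge0 // oppr_ge0 ltW.
  have nn : forall i j, 0 <= Pt i j + t * D i j.
    move=> i j; case: (ltP (D i j) 0) => Dij.
      have := xsmin (i, j) Dij; rewrite /f /= ler_pdivlMr ?oppr_gt0 // => h.
      by rewrite mulrN -/(f xs) -/t in h; lra.
    by apply: addr_ge0; [exact: P0 | exact: mulr_ge0].
  have tQ := tr_add tP bD nn.
  set Q := Pt + t *: D.
  have Qxs : Q xs.1 xs.2 = 0.
    by rewrite /Q !mxE /t /f; field; rewrite lt_eqF.
  have Pxs : Pt xs.1 xs.2 != 0 by apply/eqP => Pz; move: Dxs; rewrite (sD' _ _ Pz) ltxx.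
  have sub : forall i j, Pt i j = 0 -> Q i j = 0.
    by move=> i j Pz; rewrite /Q !mxE Pz (sD' _ _ Pz) mulr0 addr0.
  have lt : power_sum 0 Q < power_sum 0 Pt.
    rewrite !psum0.
    apply: (@sum2_lt R m n _ _ (fun _ _ => true) xs.1 xs.2) => //.
      move=> i j _; case: (eqVneq (Pt i j) 0) => [Pz | Pn].
        by rewrite (sub _ _ Pz) eqxx.
      by case: (Q i j != 0) => /=; rewrite ?ler01 ?lexx.
    by rewrite Qxs eqxx Pxs ltr01.
  have [j0 Qj0] := tr_nzrow p0 i0 tQ.
  have [Q0 _ _] := tQ.
  apply: (contr Q tQ); rewrite !entropyE al0; apply: gk_lt1 => //.
  exact: psum_pos Q0 Qj0.
- (* convexity *)
  have apos : 0 < al by rewrite lt0r aln0.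
  have [e e0 He] := pert_eps D P0.
  have nn : forall s, s = e \/ s = - e -> forall i j, 0 <= Pt i j + s * D i j.
    move=> s hs i j; case: (eqVneq (Pt i j) 0) => [Pz | Pn].
      by rewrite Pz (sD' _ _ Pz) mulr0 addr0.
    have [h1 h2] := pm_pos e0 (He i j Pn).
    by case: hs => ->; apply: ltW.
  have tA := tr_add tP bD (nn e (or_introl erefl)).
  have tB := tr_add tP bD (nn (- e) (or_intror erefl)).
  have suppE : forall s, s = e \/ s = - e -> forall i j, ((Pt + s *: D) i j != 0) = (Pt i j != 0).
    move=> s hs i j; rewrite !mxE; case: (eqVneq (Pt i j) 0) => [Pz | Pn].
      by rewrite Pz (sD' _ _ Pz) mulr0 addr0 eqxx.
    have [h1 h2] := pm_pos e0 (He i j Pn).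
    by case: hs => ->; rewrite gt_eqF.
  have SE : forall s, s = e \/ s = - e -> power_sum al (Pt + s *: D) =
      \sum_i \sum_(j | Pt i j != 0) powR (Pt i j + s * D i j) al.
    move=> s hs; rewrite /power_sum; apply: eq_bigr => i _.
    apply: eq_big => j; first exact: suppE.
    by rewrite !mxE.
  have SA := SE e (or_introl erefl).
  have SB := SE (- e) (or_intror erefl).
  have pos : forall s, s = e \/ s = - e -> 0 < power_sum al (Pt + s *: D).
    move=> s hs; have [Q0 _ _] := tr_add tP bD (nn s hs).
    by apply: (psum_pos al Q0 (i0 := i1) (j0 := j1)); rewrite suppE.
  have S0 : 0 < power_sum al Pt by exact: psum_pos P0 Pt1.
  have sumE : power_sum al (Pt + e *: D) + power_sum al (Pt + (- e) *: D) =
      \sum_i \sum_(j | Pt i j != 0) (powR (Pt i j + e * D i j) al + powR (Pt i j - e * D i j) al).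
    rewrite SA SB -big_split /=; apply: eq_bigr => i _.
    by rewrite -big_split /=; apply: eq_bigr => j _; rewrite mulNr.
  have twoE : 2 * power_sum al Pt = \sum_i \sum_(j | Pt i j != 0) (2 * powR (Pt i j) al).
    by rewrite /power_sum mulr_sumr; apply: eq_bigr => i _; rewrite mulr_sumr.
  have dn : e * D i1 j1 != 0 by rewrite mulf_neq0 // gt_eqF.
  case: (ltgtP al 1) => [alt | agt | /eqP]; last by rewrite (negPf a1).
  + have key : power_sum al (Pt + e *: D) + power_sum al (Pt + (- e) *: D) < 2 * power_sum al Pt.
      rewrite sumE twoE; apply: (sum2_lt (i0 := i1) (j0 := j1)) => //.
        move=> i j Pn; case: (eqVneq (e * D i j) 0) => [-> | dn'].
          by rewrite addr0 subr0 mulr2n mulrDl mul1r.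
        have [h1 h2] := pm_pos e0 (He i j Pn).
        apply: ltW; apply: pow_pair_lt1 => //; first by rewrite apos alt.
          by rewrite lt0r Pn P0.
        by rewrite -mulNr.
      have [h1 h2] := pm_pos e0 (He i1 j1 Pt1).
      apply: pow_pair_lt1 => //; first by rewrite apos alt.
        by rewrite lt0r Pt1 P0.
      by rewrite -mulNr.
    have [hA | hB] : power_sum al (Pt + e *: D) < power_sum al Pt \/
                     power_sum al (Pt + (- e) *: D) < power_sum al Pt.
      case: (ltP (power_sum al (Pt + e *: D)) (power_sum al Pt)) => h; [by left | right; lra].
    * apply: (contr _ tA); rewrite !entropyE; apply: gk_lt1 => //.
      exact: pos e (or_introl erefl).
    * apply: (contr _ tB); rewrite !entropyE; apply: gk_lt1 => //.
      exact: pos (- e) (or_intror erefl).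
  + have key : 2 * power_sum al Pt < power_sum al (Pt + e *: D) + power_sum al (Pt + (- e) *: D).
      rewrite sumE twoE; apply: (sum2_lt (i0 := i1) (j0 := j1)) => //.
        move=> i j Pn; case: (eqVneq (e * D i j) 0) => [-> | dn'].
          by rewrite addr0 subr0 mulr2n mulrDl mul1r.
        have [h1 h2] := pm_pos e0 (He i j Pn).
        apply: ltW; apply: pow_pair_gt1 => //.
          by rewrite lt0r Pn P0.
        by rewrite -mulNr.
      have [h1 h2] := pm_pos e0 (He i1 j1 Pt1).
      apply: pow_pair_gt1 => //.
        by rewrite lt0r Pt1 P0.
      by rewrite -mulNr.
    have [hA | hB] : power_sum al Pt < power_sum al (Pt + e *: D) \/
                     power_sum al Pt < power_sum al (Pt + (- e) *: D).
      case: (ltP (power_sum al Pt) (power_sum al (Pt + e *: D))) => h; [by left | right; lra].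
    * by apply: (contr _ tA); rewrite !entropyE; apply: gk_gt1.
    * by apply: (contr _ tB); rewrite !entropyE; apply: gk_gt1.
Qed.

End Main.

Unset Implicit Arguments.
Local Open Scope classical_set_scope.

Theorem corollary1p1 (R : realType) (m n : nat) (p : 'I_m -> R) (q : 'I_n -> R)
    (alpha : R) (k : entropy_kind) (Pt : 'M[R]_(m, n)) :
  (2 <= m)%N -> (2 <= n)%N ->
  (forall i, 0 < p i) -> \sum_(i < m) p i = 1 ->
  (forall j, 0 < q j) -> \sum_(j < n) q j = 1 ->
  0 <= alpha -> alpha != 1 ->
  transport p q Pt ->
  entropy k alpha Pt = inf [set entropy k alpha P | P in transport p q] ->
  [/\ tree_transport p q Pt,
      (forall P, tree_transport p q P <-> extreme p q P) &
      (forall P, tree_transport p q P -> entropy k alpha Pt <= entropy k alpha P)].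
Proof.
move=> m2 n2 p0 p1 q0 q1 a0 a1 tPt hinf.
have m0 : (0 < m)%N by apply: leq_trans m2.
pose i0 : 'I_m := Ordinal m0.
have minP : forall P, transport p q P -> entropy k alpha Pt <= entropy k alpha P.
  move=> P tP; rewrite hinf; apply: ge_inf; last by exists P.
  exists 0; move=> y [P' tP' <-]; exact: (ent_ge0 p0 p1 k a0 a1 tP').
have toTree : forall P, transport p q P -> indep R (Defs.support P) -> tree_transport p q P.
  move=> P tP iS.
  have [j0 Pj0] := tr_nzrow p0 i0 tP.
  have x0S : (i0, j0) \in Defs.support P by rewrite in_supportM.
  have [T [tT cT sT]] := extend x0S iS.
  by split => //; exists T.
split.
- exact: (toTree _ tPt (min_indep i0 p0 a0 a1 tPt minP)).
- move=> P; split; first exact: tree_extreme.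
  move=> eP; apply: toTree; first by case: eP.
  exact: (extreme_indep eP).
- by move=> P [tP _]; apply: minP.
Qed.
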